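(* For every $\varepsilon>0$ there exists $N\in\omega$ such that for every $n\geq N$ there is a set $A\subseteq 2^n$ with $\frac{|A|}{2^n}<\varepsilon$ having the following property: for every $u\subseteq n$ with $\frac{n}{4}\leq |u|\leq \frac{3n}{4}$, and all $B_0\subseteq 2^u$ and $B_1\subseteq 2^{n\setminus u}$ with $\frac{|B_0|}{2^{|u|}}\geq \frac12$ and $\frac{|B_1|}{2^{|n\setminus u|}}\geq\frac12$, we have $(B_0\times B_1)\cap A\neq\emptyset$.
   Context: Here $n=\{0,1,\dots,n-1\}$ and $2^a$ denotes the set of functions from $a$ to $\{0,1\}$. The product $B_0\times B_1$ is identified with the set of $s\in 2^n$ such that $s\restriction u\in B_0$ and $s\restriction (n\setminus u)\in B_1$. *)

(* Defs.v *)
From HB Require Import structures.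
From mathcomp Require Import all_boot all_order all_algebra.
From mathcomp Require Export reals.
Set Implicit Arguments. Unset Strict Implicit. Unset Printing Implicit Defensive.

(* 2^n = finite functions 'I_n -> bool; for u : {set 'I_n},
   2^u = finite functions from the subtype {i | i \in u} to bool. *)
Definition cube (n : nat) := {ffun 'I_n -> bool}.
Definition subcube (n : nat) (u : {set 'I_n}) := {ffun {i : 'I_n | i \in u} -> bool}.

Definition restr (n : nat) (u : {set 'I_n}) (s : cube n) : subcube u :=
  [ffun i : {i : 'I_n | i \in u} => s (val i)].

(* Main.v *)
Require Import Defs.
From HB Require Import structures.
From mathcomp Require Import all_boot all_order all_algebra.
From mathcomp Require Import reals.
From mathcomp Require Import zify lra.
Import Order.TTheory GRing.Theory Num.Theory.
Set Implicit Arguments. Unset Strict Implicit. Unset Printing Implicit Defensive.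

Local Open Scope nat_scope.

Definition Nc (p m r : nat) := \sum_(k < m.+1) (if k %% p == r then 'C(m, k) else 0).
Definition pr (p r : nat) := if r == 0 then p.-1 else r.-1.

Lemma pr_lt p r : 0 < p -> r < p -> pr p r < p.
Proof. rewrite /pr; case: eqP; lia. Qed.

Lemma modS_pr p q r : 0 < p -> q < p -> r < p -> ((q.+1) %% p == r) = (q == pr p r).
Proof.
move=> p0 qp rp; rewrite /pr.
have [e|ne] := eqVneq q.+1 p.
  rewrite e modnn; case: r rp => [|r] rp /=; apply/eqP/eqP; lia.
rewrite modn_small; last lia.
case: r rp => [|r] rp /=; apply/eqP/eqP; lia.
Qed.

Lemma modS_pr' p k r : 0 < p -> r < p -> ((k.+1) %% p == r) = (k %% p == pr p r).
Proof.
move=> p0 rp; rewrite -addn1 -modnDml addn1 modS_pr //; exact: ltn_pmod.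
Qed.

Lemma Nc_rec p m r : 0 < p -> r < p -> Nc p m.+1 r = Nc p m r + Nc p m (pr p r).
Proof.
move=> p0 rp; rewrite /Nc big_ord_recl /=.
under eq_bigr => i _ do rewrite /bump /= add1n binS modS_pr' //.
rewrite /Nc [X in _ = X + _]big_ord_recl /=.
have -> : \sum_(i < m.+1) (if i %% p == pr p r then 'C(m, i.+1) + 'C(m, i) else 0)
   = \sum_(i < m.+1) (if i %% p == pr p r then 'C(m, i.+1) else 0)
   + \sum_(i < m.+1) (if i %% p == pr p r then 'C(m, i) else 0).
  rewrite -big_split /=; apply: eq_bigr => i _; by case: ifP.
rewrite [X in _ + (X + _) = _]big_ord_recr /= (bin_small (ltnSn m)) if_same addn0.
under [X in _ = _ + X + _]eq_bigr => i _ do rewrite /bump /= add1n modS_pr' //.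
by rewrite !bin0 addnA.
Qed.

Lemma Nc0 p r : Nc p 0 r = (if 0 %% p == r then 1 else 0).
Proof. by rewrite /Nc big_ord1. Qed.

Lemma Nc_sum p m : 0 < p -> \sum_(r < p) Nc p m r = 2 ^ m.
Proof.
move=> p0; rewrite /Nc exchange_big /=.
have -> : 2 ^ m = \sum_(k < m.+1) 'C(m, k).
  by rewrite -{1}[2]/(1 + 1) expnDn; apply: eq_bigr => i _; rewrite !exp1n !muln1.
apply: eq_bigr => k _.
rewrite (bigD1 (Ordinal (ltn_pmod k p0))) //= eqxx big1 ?addn0 // => i /negbTE ne.
case: eqP => // e; move: ne; suff -> : i == Ordinal (ltn_pmod k p0) by [].
by apply/eqP/val_inj => /=.
Qed.

Definition Q p m s := exists lo, forall r, r < p -> lo <= Nc p m r <= lo + s.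

Lemma Q0 p : 1 < p -> Q p 0 1.
Proof.
move=> p1; exists 0 => r rp; rewrite Nc0; case: ifP => //.
Qed.

Lemma Q1 p m s : 0 < p -> Q p m s -> Q p m.+1 (2 * s).
Proof.
move=> p0 [lo H]; exists (2 * lo) => r rp; rewrite Nc_rec //.
have := H r rp; have := H (pr p r) (pr_lt p0 rp); lia.
Qed.

Definition dist p r0 r := if r0 <= r then r - r0 else r + p - r0.

Lemma dist_pr p r0 r i : 0 < p -> r0 < p -> r < p -> dist p r0 r <= i.+1 ->
  dist p r0 r <= i \/ dist p r0 (pr p r) <= i.
Proof.
move=> p0 r0p rp; rewrite /dist /pr.
case: eqP => d; case: (leqP r0 r) => a; case: (leqP r0 r.-1) => b; case: (leqP r0 p.-1) => c;
 lia.
Qed.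

Lemma dist_lt p r0 r : r0 < p -> r < p -> dist p r0 r < p.
Proof. rewrite /dist; case: (leqP r0 r); lia. Qed.

Lemma dist0 p r0 r : r0 < p -> r < p -> dist p r0 r <= 0 -> r = r0.
Proof. rewrite /dist; case: (leqP r0 r); lia. Qed.

Lemma kstep p m lo hi r0 : 0 < p -> r0 < p -> Nc p m r0 = lo ->
  (forall r, r < p -> lo <= Nc p m r <= hi) ->
  forall i r, r < p -> [/\ 2 ^ i * lo <= Nc p (m + i) r, Nc p (m + i) r <= 2 ^ i * hi &
     (dist p r0 r <= i -> Nc p (m + i) r + hi <= 2 ^ i * hi + lo)].
Proof.
move=> p0 r0p e H; elim=> [|i IH] r rp.
  rewrite addn0 !mul1n; have := H r rp; split; try lia.
  by move=> /(dist0 r0p rp) ->; rewrite e; lia.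
rewrite addnS Nc_rec // expnS.
have [a1 a2 a3] := IH r rp; have [b1 b2 b3] := IH (pr p r) (pr_lt p0 rp).
split; try nia.
move=> /(dist_pr p0 r0p rp) [/a3|/b3]; nia.
Qed.

Lemma argmin_ex (f : nat -> nat) p : 0 < p -> exists r0, r0 < p /\ forall r, r < p -> f r0 <= f r.
Proof.
move=> p0; have [i _ Hi] := @arg_minnP _ (Ordinal p0) xpredT (fun i : 'I_p => f i) isT.
exists i; split => // r rp; exact: (Hi (Ordinal rp)).
Qed.

Lemma Qk p m s : 1 < p -> Q p m s -> Q p (m + p.-1) ((2 ^ p.-1).-1 * s).
Proof.
move=> p1 [lo H]; have p0 : 0 < p by lia.
have [r0 [r0p Hr0]] := argmin_ex (Nc p m) p0.
have H' : forall r, r < p -> Nc p m r0 <= Nc p m r <= Nc p m r0 + s.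
  move=> r rp; have := H r rp; have := H r0 r0p; have := Hr0 r rp; lia.
have K := kstep p0 r0p erefl H' (p.-1).
exists (2 ^ p.-1 * Nc p m r0) => r rp; have [k1 k2 k3] := K r rp.
have D : dist p r0 r <= p.-1 by have := dist_lt r0p rp; lia.
have := k3 D.
have : 0 < 2 ^ p.-1 by rewrite expn_gt0.
move: (2 ^ p.-1) k1 => x k1 x0; nia.
Qed.

Lemma QJ p j : 1 < p -> Q p (j * p.-1) ((2 ^ p.-1).-1 ^ j).
Proof.
move=> p1; elim: j => [|j IH]; first by rewrite mul0n expn0; exact: Q0.
by rewrite mulSn addnC expnS; apply: Qk.
Qed.

Lemma QT p m s t : 0 < p -> Q p m s -> Q p (m + t) (2 ^ t * s).
Proof.
move=> p0 H; elim: t => [|t IH]; first by rewrite addn0 mul1n.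
by rewrite addnS expnS -mulnA; apply: Q1.
Qed.

Lemma bern b j : b ^ j * (b + j) <= b * (b.+1) ^ j.
Proof.
elim: j => [|j IH]; first by rewrite !expn0 addn0 mul1n muln1.
rewrite !expnS.
have : b ^ j * (b + j) * b.+1 <= b * b.+1 ^ j * b.+1 by rewrite leq_mul2r IH orbT.
nia.
Qed.

Lemma Nc_bound p : 1 < p -> exists M, forall m, M <= m -> forall r, r < p ->
  p ^ 2 * Nc p m r <= p.+1 * 2 ^ m.
Proof.
move=> p1; have p0 : 0 < p by lia.
set k := p.-1; set b := (2 ^ k).-1; set j := p ^ 2 * b.
have k1 : 0 < k by rewrite /k; lia.
have b1 : 0 < b by rewrite /b; have := ltn_exp2l 0 k (isT : 1 < 2); rewrite expn0; lia.
have bk : b.+1 = 2 ^ k by rewrite /b prednK // expn_gt0.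
exists (j * k) => m Mm r rp.
have [lo H] := QT (m - j * k) p0 (QJ j p1).
rewrite subnKC // in H.
have [H1 H2] := andP (H r rp).
have Hs : p * lo <= 2 ^ m.
  rewrite -(Nc_sum m p0).
  have : \sum_(i < p) lo <= \sum_(i < p) Nc p m i.
    by apply: leq_sum => i _; have [] := andP (H i (ltn_ord i)).
  by rewrite sum_nat_const card_ord.
have Hb : p ^ 2 * b ^ j <= 2 ^ (j * k).
  have h := bern b j; rewrite bk -expnM in h.
  rewrite [j * k]mulnC -(leq_pmul2l b1); apply: leq_trans h.
  rewrite {2}/j; move: (b ^ j) => X; nia.
have Hm : 2 ^ m = 2 ^ (m - j * k) * 2 ^ (j * k) by rewrite -expnD subnK.
rewrite -/k -/b in H2.
move: (2 ^ (m - j * k)) (b ^ j) (2 ^ (j * k)) Hm H2 Hb => T X Y Hm H2 Hb.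
have e1 : p ^ 2 * Nc p m r <= p ^ 2 * lo + T * (p ^ 2 * X).
  by rewrite mulnCA -mulnDr leq_mul2l H2 orbT.
have e2 : T * (p ^ 2 * X) <= T * Y by rewrite leq_mul2l Hb orbT.
have e3 : p ^ 2 * lo <= p * 2 ^ m by rewrite expnS expn1 -mulnA leq_mul2l Hs orbT.
rewrite mulSn; lia.
Qed.

Definition wt (T : finType) (x : {ffun T -> bool}) := #|[set i | x i]|.

Lemma count_sets (T : finType) p r : 0 < p ->
  #|[set X : {set T} | #|X| %% p == r]| = Nc p #|T| r.
Proof.
move=> p0; rewrite /Nc.
under eq_bigr => k _ do rewrite -card_draws.
rewrite -sum1_card.
transitivity (\sum_(X : {set T}) \sum_(k < #|T|.+1)
   (if k %% p == r then (if #|X| == k then 1 else 0) else 0)).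
  rewrite big_mkcond /=; apply: eq_bigr => X _.
  have XT : #|X| < #|T|.+1 by rewrite ltnS max_card.
  rewrite (bigD1 (Ordinal XT)) //= eqxx big1 ?addn0.
    by rewrite inE; case: ifP.
  move=> i /negbTE ne; case: ifP => // _; case: eqP => // e.
  by move: ne; suff -> : i == Ordinal XT by []; apply/eqP/val_inj.
rewrite exchange_big /=; apply: eq_bigr => k _.
case: ifP => _; last by rewrite big1.
transitivity (\sum_(X in [set A : {set T} | #|A| == k]) 1); last exact: sum1_card.
rewrite [RHS]big_mkcond /=; apply: eq_bigr => X _; by rewrite inE.
Qed.

Lemma count_wt (T : finType) p r : 0 < p ->
  #|[set x : {ffun T -> bool} | wt x %% p == r]| = Nc p #|T| r.
Proof.
move=> p0; rewrite -count_sets //.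
have inj : injective (fun x : {ffun T -> bool} => [set i | x i]).
  move=> x y e; apply/ffunP => i; have := congr1 (fun X : {set T} => i \in X) e; by rewrite !inE.
rewrite -(card_imset _ inj); apply: eq_card => X; rewrite inE.
apply/imsetP/idP => [[x]|h].
  by rewrite inE => h ->.
exists [ffun i => i \in X]; last by apply/setP => i; rewrite !inE ffunE.
rewrite inE /wt; suff -> : [set i | [ffun i => i \in X] i] = X by [].
by apply/setP => i; rewrite !inE ffunE.
Qed.

Definition resid (T : finType) p (B : {set {ffun T -> bool}}) :=
  [set r : 'I_p | [exists x in B, wt x %% p == r]].

Lemma many_residues (T : finType) p (B : {set {ffun T -> bool}}) :
  1 < p -> odd p -> (forall r, r < p -> p ^ 2 * Nc p #|T| r <= p.+1 * 2 ^ #|T|) ->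
  2 ^ #|T| <= 2 * #|B| -> p < 2 * #|resid p B|.
Proof.
move=> p1 op HN HB; have p0 : 0 < p by lia.
pose cls (x : {ffun T -> bool}) : 'I_p := Ordinal (ltn_pmod (wt x) p0).
have E : #|B| = \sum_(r : 'I_p) \sum_(x in B | cls x == r) 1.
  transitivity (\sum_(x in B) 1); first by symmetry; exact: sum1_card.
  by apply: partition_big.
have F : forall r : 'I_p, p ^ 2 * \sum_(x in B | cls x == r) 1
   <= (r \in resid p B) * (p.+1 * 2 ^ #|T|).
  move=> r; case: (boolP (r \in resid p B)) => Rr /=.
    rewrite mul1n; apply: leq_trans (HN r (ltn_ord r)); rewrite leq_mul2l; apply/orP; right.
    rewrite -(count_wt T r p0).
    apply: (@leq_trans (\sum_(x | wt x %% p == r) 1)).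
      rewrite big_mkcond [X in _ <= X]big_mkcond /=.
      apply: leq_sum => x _; case: (x \in B) => //=; case: eqP => // <-.
    by rewrite sum1_card cardsE.
  rewrite big1 ?muln0 // => x /andP [xB /eqP e]; move: Rr; rewrite inE.
  by move/existsP => []; exists x; rewrite xB -e /=.
have G : p ^ 2 * #|B| <= #|resid p B| * (p.+1 * 2 ^ #|T|).
  rewrite E big_distrr /=.
  apply: (@leq_trans (\sum_(r < p) (r \in resid p B) * (p.+1 * 2 ^ #|T|))).
    by apply: leq_sum => r _; exact: F.
  rewrite -sum_nat_const [X in _ <= X]big_mkcond /=; apply: leq_sum => r _; by case: (r \in resid p B); rewrite ?mul1n ?mul0n.
have e2 : 0 < 2 ^ #|T| by rewrite expn_gt0.
have od := odd_double_half p; rewrite op /= in od.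
move: (2 ^ #|T|) (#|resid p B|) (#|B|) G HB e2 => X R b G HB e2.
have h1 : p ^ 2 * X <= p ^ 2 * (2 * b) by rewrite leq_mul2l HB orbT.
have h2 : p ^ 2 * X <= (2 * R * p.+1) * X.
  apply: leq_trans h1 _; rewrite mulnCA -!mulnA leq_mul2l /=; by rewrite mulnA.
rewrite leq_pmul2r // in h2.
move: od; rewrite -muln2 => od.
set q := p./2 in od; rewrite ltnNge; apply/negP => hR.
have Rq : R <= q by lia.
have : 2 * R * p.+1 <= 2 * q * p.+1 by rewrite leq_mul2r leq_mul2l Rq !orbT.
rewrite -od in h2 *; move: h2; rewrite expnS expn1; nia.
Qed.

Definition negI p (r : 'I_p) : 'I_p.
Proof. refine (@Ordinal p (if nat_of_ord r == 0 then 0 else p - nat_of_ord r) _).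
have := ltn_ord r; case: eqP => e; lia.
Defined.

Lemma negI_inj p : injective (@negI p).
Proof.
move=> a b /(congr1 val) /=; have := ltn_ord a; have := ltn_ord b.
move=> ha hb e; apply: val_inj; move: e; case: eqP => ea; case: eqP => eb /=; lia.
Qed.

Lemma negI_mod p (r : 'I_p) : (nat_of_ord (negI r) + nat_of_ord r) %% p == 0.
Proof.
rewrite /=; case: (eqVneq (nat_of_ord r) 0) => e; first by rewrite e mod0n.
have := ltn_ord r; move=> h; rewrite subnK ?modnn //; lia.
Qed.

Lemma pigeon p (R0 R1 : {set 'I_p}) : p < #|R0| + #|R1| ->
  exists r0 r1 : 'I_p, [/\ r0 \in R0, r1 \in R1 & (nat_of_ord r0 + nat_of_ord r1) %% p == 0].
Proof.
move=> h; have c1 : #|@negI p @: R1| = #|R1| := card_imset _ (@negI_inj p).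
have cU := cardsU R0 (@negI p @: R1).
have mU : #|R0 :|: @negI p @: R1| <= p by rewrite -[X in _ <= X](card_ord p) max_card.
rewrite c1 in cU. have : 0 < #|R0 :&: @negI p @: R1|. move: cU mU h. move: (#|R0 :&: _|) => I. lia.
rewrite card_gt0 => /set0Pn [r /setIP [rR0 /imsetP [r1 r1R e]]]; subst r.
by exists (negI r1), r1; split => //; exact: negI_mod.
Qed.

Lemma wt_restr n (u : {set 'I_n}) (s : cube n) :
  wt (restr u s : {ffun {i : 'I_n | i \in u} -> bool}) = #|[set i | s i] :&: u|.
Proof.
rewrite /wt -(card_imset _ val_inj); apply: eq_card => i; rewrite !inE.
apply/imsetP/andP => [[j]|[si iu]].
  by rewrite inE ffunE => sj ->; split => //; exact: valP.
by exists (exist _ i iu); rewrite // inE ffunE.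
Qed.

Lemma wt_split n (u : {set 'I_n}) (s : cube n) :
  wt (s : {ffun 'I_n -> bool}) = wt (restr u s : {ffun {i : 'I_n | i \in u} -> bool})
     + wt (restr (~: u) s : {ffun {i : 'I_n | i \in ~: u} -> bool}).
Proof. by rewrite !wt_restr -setDE cardsID. Qed.

Lemma glue n (u : {set 'I_n}) (x0 : subcube u) (x1 : subcube (~: u)) :
  exists s : cube n, restr u s = x0 /\ restr (~: u) s = x1.
Proof.
exists [ffun i => if insub i is Some j then x0 j
                  else if insub i is Some j then x1 j else false].
split; apply/ffunP => j; rewrite !ffunE.
  by rewrite valK.
have h : val j \notin u by have := valP j; rewrite inE.
by rewrite insubN // valK.
Qed.

Local Open Scope ring_scope.

Lemma real_half (R : realType) (b c : nat) : (0 < c)%N ->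
  1 / 2 <= b%:R / c%:R :> R -> (c <= 2 * b)%N.
Proof.
move=> c0; rewrite ler_pdivlMr ?ltr0n // => h.
by rewrite -(ler_nat R) natrM; lra.
Qed.

Lemma real_q1 (R : realType) (n k : nat) : n%:R / 4 <= k%:R :> R -> (n <= 4 * k)%N.
Proof. by move=> h; rewrite -(ler_nat R) natrM; lra. Qed.

Lemma real_q3 (R : realType) (n k : nat) : k%:R <= 3 * n%:R / 4 :> R -> (4 * k <= 3 * n)%N.
Proof. by move=> h; rewrite -(ler_nat R) !natrM; lra. Qed.

Theorem mainTheorem1 (R : realType) (eps : R) : 0 < eps ->
  exists N : nat, forall n : nat, (N <= n)%N ->
    exists A : {set cube n},
      (#|A|%:R / (2 ^ n)%:R < eps) /\
      forall (u : {set 'I_n}),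
        n%:R / 4 <= #|u|%:R :> R -> #|u|%:R <= 3 * n%:R / 4 :> R ->
        forall (B0 : {set subcube u}) (B1 : {set subcube (~: u)}),
          1 / 2 <= #|B0|%:R / (2 ^ #|u|)%:R :> R ->
          1 / 2 <= #|B1|%:R / (2 ^ #|~: u|)%:R :> R ->
          exists s : cube n, [/\ s \in A, restr u s \in B0 & restr (~: u) s \in B1].
Proof.
move=> eps0.
have e2 : 0 <= 2 / eps by rewrite divr_ge0 // ltW.
have hK := archi_boundP e2; set K := Num.Def.archi_bound _ in hK.
pose p := (K.*2).+3.
have p1 : (1 < p)%N by [].
have op : odd p by rewrite /p /= odd_double.
have [M HM] := Nc_bound p1.
exists (4 * M)%N => n Nn.
have p0 : (0 < p)%N by [].
exists [set s : cube n | (wt (s : {ffun 'I_n -> bool}) %% p == 0)%N]; split.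
  have cA : #|[set s : cube n | (wt (s : {ffun 'I_n -> bool}) %% p == 0)%N]| = Nc p n 0.
    by have := count_wt 'I_n 0 p0; rewrite card_ord.
  rewrite cA; have hb := HM n (leq_trans (leq_pmull M (isT : (0 < 4)%N)) Nn) 0 p0.
  have hr : (p ^ 2 * Nc p n 0)%:R <= (p.+1 * 2 ^ n)%:R :> R by rewrite ler_nat.
  rewrite !natrM -addn1 natrD in hr.
  have X0 : 0 < (2 ^ n)%:R :> R by rewrite ltr0n expn_gt0.
  rewrite ltr_pdivrMr //.
  have pq : (p%:R : R) = 2 * K%:R + 3 by rewrite /p -addn3 -mul2n natrD natrM.
  rewrite ltr_pdivrMr // in hK.
  have K0 : 0 <= K%:R :> R by [].
  move: (Nc p n 0)%:R (2 ^ n)%:R (p%:R : R) (K%:R : R) hr X0 pq hK K0 => a X q k hr X0 pq hK K0.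
  have h4 : 4 < eps * q by rewrite pq; nra.
  have h5 : q + 1 < eps * q * q by nra.
  have q0 : 0 < q * q by nra.
  have h6 : (q + 1) * X < (eps * q * q) * X by rewrite ltr_pM2r.
  rewrite -(ltr_pM2l q0). lra.
move=> u hu1 hu2 B0 B1 hB0 hB1.
have n1 := real_q1 hu1; have n3 := real_q3 hu2.
have cu : #|{: {i : 'I_n | i \in u}}| = #|u| by rewrite card_sig; apply: eq_card.
have cv : #|{: {i : 'I_n | i \in ~: u}}| = #|~: u| by rewrite card_sig; apply: eq_card.
have cvu : #|~: u| = (n - #|u|)%N by rewrite cardsCs setCK card_ord.
have Mu : (M <= #|{: {i : 'I_n | i \in u}}|)%N by rewrite cu; lia.
have Mv : (M <= #|{: {i : 'I_n | i \in ~: u}}|)%N by rewrite cv cvu; lia.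
have HB0 : (2 ^ #|{: {i : 'I_n | i \in u}}| <= 2 * #|B0|)%N.
  by rewrite cu; apply: (real_half (R := R)) => //; rewrite expn_gt0.
have HB1 : (2 ^ #|{: {i : 'I_n | i \in ~: u}}| <= 2 * #|B1|)%N.
  by rewrite cv; apply: (real_half (R := R)) => //; rewrite expn_gt0.
have R0 := many_residues p1 op (HM _ Mu) HB0.
have R1 := many_residues p1 op (HM _ Mv) HB1.
have hp : (p < #|resid p B0| + #|resid p B1|)%N by lia.
have [r0 [r1 [r0R r1R hr]]] := pigeon hp.
move: r0R; rewrite inE => /existsP [x0 /andP [x0B h0]].
move: r1R; rewrite inE => /existsP [x1 /andP [x1B h1]].
have [s [e0 e1]] := glue x0 x1.
exists s; split; [|by rewrite e0|by rewrite e1].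
rewrite inE (wt_split u) e0 e1 -modnDm (eqP h0) (eqP h1); exact: hr.
Qed.
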